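(* Let $L=(l_1,\dots,l_n)$, $n\ge 4$, be a generic length vector satisfying the strict triangle inequality. For any two vertices $V,V'$ of $\Gamma(L)$, there is a path in $\Gamma(L)$ of length at most $7$ from $V$ either to $V'$ or to the mirror image of $V'$.
   Context: Let $n\ge 4$ and $L=(l_1,\dots,l_n)$ be positive reals with $l_i<\sum_{j\ne i}l_j$ for every $i$ (strict triangle inequality), and generic: there is no $J\subseteq[n]$ with $\sum_{i\in J}l_i=\sum_{i\notin J}l_i$. Here $[n]=\{1,\dots,n\}$ and $|L|=\sum_{i=1}^n l_i$. A set $I\subseteq[n]$ is short if $\sum_{i\in I}l_i<|L|/2$ and long otherwise. A cyclically ordered partition of $[n]$ into $k$ parts is a sequence $(A_1,\dots,A_k)$ of pairwise disjoint nonempty sets with union $[n]$, considered up to cyclic shifts $(A_1,\dots,A_k)\sim(A_2,\dots,A_k,A_1)$; there is no ordering inside a part. It is admissible if every part is short. The graph $\Gamma(L)$ has as vertices the admissible cyclically ordered partitions of $[n]$ into 3 parts, written $(I,J,K)$, and as edges the admissible cyclically ordered partitions into 4 parts $(A,B,C,D)$; such an edge is incident to each of the partitions $(A\cup B,C,D)$, $(A,B\cup C,D)$, $(A,B,C\cup D)$, $(D\cup A,B,C)$ that is admissible. Equivalently, two vertices are adjacent iff one is obtained from the other by moving a nonempty proper subset of one part into another part. The length of a path is its number of edges. The mirror image of a vertex $(I,J,K)$ is the vertex $(J,I,K)$ (same parts, reversed cyclic order). *)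

(* Defs.v *)
From HB Require Import structures.
From mathcomp Require Import all_boot all_order all_algebra.
Set Implicit Arguments. Unset Strict Implicit. Unset Printing Implicit Defensive.
Import Order.TTheory GRing.Theory Num.Theory.
Local Open Scope ring_scope.

Section Polygon.
Variables (R : realFieldType) (n : nat) (l : 'I_n -> R).

Definition totlen : R := \sum_(i < n) l i.

Definition short (S : {set 'I_n}) : bool := (\sum_(i in S) l i) < totlen / 2%:R.

(* ordered triples / quadruples of subsets; cyclic order is handled by cyc3 / cyc4 *)
Definition triple := ({set 'I_n} * {set 'I_n} * {set 'I_n})%type.
Definition quad := ({set 'I_n} * {set 'I_n} * {set 'I_n} * {set 'I_n})%type.

Definition mk3 (P1 P2 P3 : {set 'I_n}) : triple := (P1, P2, P3).
Definition mk4 (A B C D : {set 'I_n}) : quad := (A, B, C, D).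

Definition vertex3 (T : triple) : bool :=
  let: (P1, P2, P3) := T in
  [&& P1 != set0, P2 != set0, P3 != set0,
      [disjoint P1 & P2], [disjoint P2 & P3], [disjoint P1 & P3],
      P1 :|: P2 :|: P3 == [set: 'I_n],
      short P1, short P2 & short P3].

Definition edge4 (Q : quad) : bool :=
  let: (A, B, C, D) := Q in
  [&& A != set0, B != set0, C != set0, D != set0,
      [&& [disjoint A & B], [disjoint A & C], [disjoint A & D],
          [disjoint B & C], [disjoint B & D] & [disjoint C & D]],
      A :|: B :|: C :|: D == [set: 'I_n] &
      [&& short A, short B, short C & short D]].

Definition cyc3 (T T' : triple) : bool :=
  let: (P1, P2, P3) := T in
  [|| T' == mk3 P1 P2 P3, T' == mk3 P2 P3 P1 | T' == mk3 P3 P1 P2].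

Definition mirror (T : triple) : triple :=
  let: (P1, P2, P3) := T in mk3 P2 P1 P3.

Definition merge (Q : quad) (k : 'I_4) : triple :=
  let: (A, B, C, D) := Q in
  match val k with
  | 0 => mk3 (A :|: B) C D
  | 1 => mk3 A (B :|: C) D
  | 2 => mk3 A B (C :|: D)
  | _ => mk3 (D :|: A) B C
  end.

Definition adj (T T' : triple) : bool :=
  [&& vertex3 T, vertex3 T' &
   [exists Q : quad, [exists k : 'I_4, [exists k' : 'I_4,
      [&& edge4 Q, k != k', cyc3 (merge Q k) T & cyc3 (merge Q k') T']]]]].

End Polygon.

(* Main.v *)
Require Import Defs.
From HB Require Import structures.
From mathcomp Require Import all_boot all_order all_algebra.
From mathcomp Require Import lra.
Import Order.TTheory GRing.Theory Num.Theory.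
Local Open Scope ring_scope.
Set Implicit Arguments. Unset Strict Implicit. Unset Printing Implicit Defensive.

Definition same3 (n : nat) (U X : triple n) := cyc3 U X || cyc3 (mirror U) X.

Ltac dtrip := repeat match goal with
  | T : triple _ |- _ => let a := fresh "a" in let b := fresh "b" in let c := fresh "c" in
      destruct T as [[a b] c]
  end.

Ltac orsolve := rewrite /cyc3 /mirror /mk3 /same3 /= ?eqxx ?orbT ?orTb //.

Lemma cyc3_refl n (T : triple n) : cyc3 T T.
Proof. by dtrip; orsolve. Qed.

Lemma cyc3_sym n (T U : triple n) : cyc3 T U -> cyc3 U T.
Proof. dtrip; rewrite /cyc3 /mk3 => /or3P [] /eqP [-> -> ->]; orsolve. Qed.

Lemma cyc3_trans n (T U W : triple n) : cyc3 T U -> cyc3 U W -> cyc3 T W.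
Proof.
dtrip; rewrite /cyc3 /mk3 => /or3P [] /eqP [-> -> ->] /or3P [] /eqP [-> -> ->]; orsolve.
Qed.

Lemma cyc3_mirror n (T U : triple n) : cyc3 T U -> cyc3 (mirror T) (mirror U).
Proof. dtrip; rewrite /cyc3 /mk3 => /or3P [] /eqP [-> -> ->]; orsolve. Qed.

Lemma same3_refl n (T : triple n) : same3 T T.
Proof. by dtrip; orsolve. Qed.

Lemma same3_sym n (T U : triple n) : same3 T U -> same3 U T.
Proof.
dtrip; rewrite /same3 /cyc3 /mirror /mk3 => /orP [] /or3P [] /eqP [-> -> ->]; orsolve.
Qed.

Lemma same3_trans n (T U W : triple n) : same3 T U -> same3 U W -> same3 T W.
Proof.
dtrip; rewrite /same3 /cyc3 /mirror /mk3 => /orP [] /or3P [] /eqP [-> -> ->]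
  /orP [] /or3P [] /eqP [-> -> ->]; orsolve.
Qed.

Lemma same3_mirror n (T U : triple n) : same3 T U -> same3 T (mirror U).
Proof.
dtrip; rewrite /same3 /cyc3 /mirror /mk3 => /orP [] /or3P [] /eqP [-> -> ->]; orsolve.
Qed.

Lemma cyc3_same3 n (T U : triple n) : cyc3 T U -> same3 T U.
Proof. by rewrite /same3 => ->. Qed.

Lemma v3_rot (R : realFieldType) n (l : 'I_n -> R) a b c :
  vertex3 l (a, b, c) -> vertex3 l (b, c, a).
Proof.
rewrite /vertex3 => /and4P [h1 h2 h3 /and4P [h4 h5 h6 /and4P [h7 h8 h9 h10]]].
rewrite h1 h2 h3 h5 h8 h9 h10 (disjoint_sym c) h6 (disjoint_sym b) h4 /=.
by rewrite andbT setUC setUA.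
Qed.

Lemma v3_mir (R : realFieldType) n (l : 'I_n -> R) a b c :
  vertex3 l (a, b, c) -> vertex3 l (b, a, c).
Proof.
rewrite /vertex3 => /and4P [h1 h2 h3 /and4P [h4 h5 h6 /and4P [h7 h8 h9 h10]]].
rewrite h1 h2 h3 h5 h8 h9 h10 (disjoint_sym b) h4 h6 /=.
by rewrite andbT (setUC b).
Qed.

Ltac vs k := match k with
  | O => assumption
  | S ?k' => first [ assumption | (apply: v3_rot; vs k') | (apply: v3_mir; vs k') ] end.

Lemma vertex3_same3 (R : realFieldType) n (l : 'I_n -> R) (T U : triple n) :
  same3 T U -> vertex3 l T -> vertex3 l U.
Proof.
dtrip; rewrite /same3 /cyc3 /mirror /mk3 => /orP [] /or3P [] /eqP [-> -> ->] h;
 vs (S (S (S O))).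
Qed.

Lemma adj_cyc (R : realFieldType) n (l : 'I_n -> R) (T U T' U' : triple n) :
  adj l T U -> cyc3 T T' -> cyc3 U U' -> adj l T' U'.
Proof.
rewrite /adj => /and3P [vT vU /existsP [Q /existsP [k /existsP [k' /and4P [e kk c1 c2]]]]] hT hU.
rewrite (vertex3_same3 (cyc3_same3 hT) vT) (vertex3_same3 (cyc3_same3 hU) vU) /=.
apply/existsP; exists Q; apply/existsP; exists k; apply/existsP; exists k'.
by rewrite e kk (cyc3_trans c1 hT) (cyc3_trans c2 hU).
Qed.

Lemma adj_sym (R : realFieldType) n (l : 'I_n -> R) (T U : triple n) :
  adj l T U -> adj l U T.
Proof.
rewrite /adj => /and3P [vT vU /existsP [Q /existsP [k /existsP [k' /and4P [e kk c1 c2]]]]].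
rewrite vT vU /=.
apply/existsP; exists Q; apply/existsP; exists k'; apply/existsP; exists k.
by rewrite e eq_sym kk c1 c2.
Qed.

Definition rev4 n (Q : quad n) : quad n := let: (A, B, C, D) := Q in (D, C, B, A).

Definition fk (k : 'I_4) : 'I_4 :=
  inord (match val k with 0 => 2 | 1 => 1 | 2 => 0 | _ => 3 end)%N.

Lemma edge4_rev (R : realFieldType) n (l : 'I_n -> R) (Q : quad n) :
  edge4 l Q -> edge4 l (rev4 Q).
Proof.
case: Q => [[[A B] C] D].
rewrite /edge4 /rev4 => /and4P [h1 h2 h3 /and4P [h4 /and5P [d1 d2 d3 d4 /andP [d5 d6]] h5 /and4P [s1 s2 s3 s4]]].
rewrite h1 h2 h3 h4 s1 s2 s3 s4 /=.
rewrite ?d1 ?d2 ?d3 ?d4 ?d5 ?d6 -?(disjoint_sym A) -?(disjoint_sym B) -?(disjoint_sym C) ?d1 ?d2 ?d3 ?d4 ?d5 ?d6 /=.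
have -> : D :|: C :|: B :|: A = A :|: B :|: C :|: D.
  by apply/setP => i; rewrite !inE; case: (i \in A); case: (i \in B); case: (i\in C); case: (i \in D).
by rewrite (disjoint_sym C B) (disjoint_sym C A) (disjoint_sym B A) d1 d2 d4 h5.
Qed.

Lemma merge_rev n (Q : quad n) (k : 'I_4) :
  cyc3 (Defs.merge (rev4 Q) (fk k)) (mirror (Defs.merge Q k)).
Proof.
case: Q => [[[A B] C] D].
case: k => [[|[|[|[|k]]]] hk] //; rewrite /fk /Defs.merge /rev4 /= inordK //=;
  rewrite /cyc3 /mirror /mk3 /= ?(setUC A) ?(setUC B) ?(setUC C) ?(setUC D) ?eqxx ?orbT //.
Qed.

Lemma fkK : involutive fk.
Proof.
move=> k; apply/val_inj; case: k => [[|[|[|[|k]]]] hk] //; rewrite /fk /= !inordK //.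
Qed.

Lemma adj_mirror (R : realFieldType) n (l : 'I_n -> R) (T U : triple n) :
  adj l T U -> adj l (mirror T) (mirror U).
Proof.
rewrite /adj => /and3P [vT vU /existsP [Q /existsP [k /existsP [k' /and4P [e kk c1 c2]]]]].
rewrite (vertex3_same3 _ vT) ?(vertex3_same3 _ vU) /=; last 2 first.
- by rewrite /same3 cyc3_refl orbT.
- by rewrite /same3 cyc3_refl orbT.
apply/existsP; exists (rev4 Q); apply/existsP; exists (fk k); apply/existsP; exists (fk k').
rewrite edge4_rev //= (inj_eq (inv_inj fkK)) kk /=.
by rewrite (cyc3_trans (merge_rev Q k) (cyc3_mirror c1)) (cyc3_trans (merge_rev Q k') (cyc3_mirror c2)).
Qed.

Definition reach (R : realFieldType) n (l : 'I_n -> R) (k : nat) (T U : triple n) :=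
  exists s : seq (triple n),
    [/\ (size s <= k)%N, path (adj l) T s &
        cyc3 U (last T s) || cyc3 (mirror U) (last T s)].

Lemma reach_refl (R : realFieldType) n (l : 'I_n -> R) (T U : triple n) :
  same3 U T -> reach l 0 T U.
Proof. by move=> h; exists [::]. Qed.

Lemma reach_le (R : realFieldType) n (l : 'I_n -> R) k k' (T U : triple n) :
  (k <= k')%N -> reach l k T U -> reach l k' T U.
Proof. by move=> hk [s [h1 h2 h3]]; exists s; split => //; apply: leq_trans hk. Qed.

Lemma reach_adj (R : realFieldType) n (l : 'I_n -> R) (T U : triple n) :
  adj l T U -> reach l 1 T U.
Proof. by move=> h; exists [:: U]; rewrite /= h cyc3_refl. Qed.

Lemma reach_lift_cyc (R : realFieldType) n (l : 'I_n -> R) k (T T' U : triple n) :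
  reach l k T U -> cyc3 T T' -> reach l k T' U.
Proof.
move=> [s [h1 h2 h3]] h; exists s; split => //.
  case: s h2 {h1 h3} => [|x s] //= /andP [a b].
  by rewrite b (adj_cyc a h (cyc3_refl x)).
case: s h2 h3 {h1} => [|x s] //= _ h3.
exact: (same3_trans h3 (cyc3_same3 h)).
Qed.

Lemma path_mirror (R : realFieldType) n (l : 'I_n -> R) (T : triple n) s :
  path (adj l) T s -> path (adj l) (mirror T) (map (@mirror n) s).
Proof.
elim: s T => [|x s IH] T //= /andP [a b].
by rewrite (adj_mirror a) IH.
Qed.

Lemma reach_lift (R : realFieldType) n (l : 'I_n -> R) k (T T' U : triple n) :
  reach l k T U -> same3 T T' -> reach l k T' U.
Proof.
move=> hr; case/orP => h; first exact: (reach_lift_cyc hr h).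
apply: (reach_lift_cyc _ h).
case: hr => s [h1 h2 h3]; exists (map (@mirror n) s); split.
- by rewrite size_map.
- exact: path_mirror.
- rewrite last_map. exact: (same3_mirror h3).
Qed.

Lemma reach_trans (R : realFieldType) n (l : 'I_n -> R) a b (T U W : triple n) :
  reach l a T U -> reach l b U W -> reach l (a + b) T W.
Proof.
move=> [s1 [h1 h2 h3]] hb.
have [s2 [g1 g2 g3]] := reach_lift hb h3.
exists (s1 ++ s2); split.
- by rewrite size_cat leq_add.
- by rewrite cat_path h2.
- by rewrite last_cat.
Qed.

Lemma reach_sym (R : realFieldType) n (l : 'I_n -> R) k (T U : triple n) :
  reach l k T U -> reach l k U T.
Proof.
move=> [s [h1 h2 h3]].
have hr : reach l k (last T s) T.
  exists (rev (belast T s)); split.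
  - by rewrite size_rev size_belast.
  - rewrite rev_path; apply: sub_path h2 => x y; exact: adj_sym.
  - case: s {h1 h2 h3} => [|x s] /=; first by rewrite cyc3_refl.
    by rewrite rev_cons last_rcons cyc3_refl.
exact: (reach_lift hr (same3_sym h3)).
Qed.

Lemma dpt n (A B : {set 'I_n}) i : [disjoint A & B] -> (i \in A) && (i \in B) = false.
Proof. by rewrite -setI_eq0 => /eqP /setP /(_ i); rewrite !inE. Qed.

Lemma upt n (A B C : {set 'I_n}) i : A :|: B :|: C == setT -> (i \in A) || (i \in B) || (i \in C).
Proof. by move=> /eqP /setP /(_ i); rewrite !inE. Qed.

Lemma spt n (S P : {set 'I_n}) i : S \subset P -> (i \in S) ==> (i \in P).
Proof. by move=> /subsetP /(_ i); case: (i \in S) => // ->. Qed.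

Lemma disjP2 n (A B : {set 'I_n}) : (forall i, (i \in A) && (i \in B) = false) -> [disjoint A & B].
Proof. by move=> h; rewrite -setI_eq0; apply/eqP/setP => i; rewrite !inE h. Qed.

Lemma setT_pt n (A : {set 'I_n}) : (forall i, i \in A) -> A == setT.
Proof. by move=> h; apply/eqP/setP => i; rewrite !inE h. Qed.

Lemma subset_pt n (A B : {set 'I_n}) : (forall i, (i \in A) ==> (i \in B)) -> A \subset B.
Proof. by move=> h; apply/subsetP => i /(implyP (h i)). Qed.

Ltac bcase := repeat match goal with
 | |- context [?i \in ?A] => case: (i \in A)
 end.

Definition w (R : realFieldType) n (l : 'I_n -> R) (S : {set 'I_n}) := \sum_(i in S) l i.

Lemma w_disjU (R : realFieldType) n (l : 'I_n -> R) (A B : {set 'I_n}) :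
  [disjoint A & B] -> w l (A :|: B) = w l A + w l B.
Proof.
move=> d; rewrite /w (big_setID A) /=.
have -> : (A :|: B) :&: A = A by apply/setP => i; rewrite !inE; bcase.
have -> : (A :|: B) :\: A = B.
  by apply/setP => i; rewrite !inE; move: (dpt i d); bcase.
done.
Qed.

Lemma w_ge0 (R : realFieldType) n (l : 'I_n -> R) (S : {set 'I_n}) :
  (forall i, 0 < l i) -> 0 <= w l S.
Proof. by move=> hp; rewrite /w sumr_ge0 // => i _; apply: ltW. Qed.

Lemma w_sub (R : realFieldType) n (l : 'I_n -> R) (S P : {set 'I_n}) :
  (forall i, 0 < l i) -> S \subset P -> w l S <= w l P.
Proof.
move=> hp hs; rewrite {2}/w (big_setID S) /=.
have -> : P :&: S = S by apply/setP => i; rewrite !inE; move: (spt i hs); bcase.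
by rewrite lerDl; apply: w_ge0.
Qed.

Lemma w_tot (R : realFieldType) n (l : 'I_n -> R) (S : {set 'I_n}) :
  w l S + w l (~: S) = totlen l.
Proof.
rewrite /totlen /w [RHS](bigID (fun i => i \in S)) /=.
by congr (_ + _); apply: eq_bigl => i; rewrite !inE.
Qed.

Lemma short_sub (R : realFieldType) n (l : 'I_n -> R) (S P : {set 'I_n}) :
  (forall i, 0 < l i) -> S \subset P -> short l P -> short l S.
Proof. by move=> hp hs; rewrite /short; apply: le_lt_trans; apply: w_sub. Qed.

Lemma w_gen (R : realFieldType) n (l : 'I_n -> R) (J : {set 'I_n}) :
  (forall J : {set 'I_n}, \sum_(i in J) l i != \sum_(i in ~: J) l i) ->
  w l J != totlen l / 2%:R.
Proof.
move=> hg; apply/eqP => e; move/eqP: (hg J); apply.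
have := w_tot l J; rewrite /w in e * => t.
rewrite e; rewrite e in t; lra.
Qed.

Lemma move1 (R : realFieldType) n (l : 'I_n -> R) (hp : forall i, 0 < l i)
  (P Q Rr S : {set 'I_n}) :
  vertex3 l (P, Q, Rr) -> S \subset P -> P :\: S != set0 -> short l (Q :|: S) ->
  vertex3 l (P :\: S, Q :|: S, Rr) /\ reach l 1 (P, Q, Rr) (P :\: S, Q :|: S, Rr).
Proof.
move=> hv hs hne hsh.
move: (hv); rewrite /vertex3 => /and4P [h1 h2 h3 /and4P [h4 h5 h6 /and4P [h7 h8 h9 h10]]].
have e1 : Q :|: S != set0 by rewrite setU_eq0 negb_and h2.
have e2 : [disjoint P :\: S & Q :|: S].
  by apply/disjP2 => i; rewrite ?inE; move: (dpt i h4) (dpt i h5) (dpt i h6) (spt i hs); bcase.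
have e3 : [disjoint Q :|: S & Rr].
  by apply/disjP2 => i; rewrite ?inE; move: (dpt i h4) (dpt i h5) (dpt i h6) (spt i hs); bcase.
have e4 : [disjoint P :\: S & Rr].
  by apply/disjP2 => i; rewrite ?inE; move: (dpt i h4) (dpt i h5) (dpt i h6) (spt i hs); bcase.
have e5 : P :\: S :|: (Q :|: S) :|: Rr == setT.
  by apply/setT_pt => i; rewrite ?inE; move: (upt i h7) (spt i hs); bcase.
have e6 : short l (P :\: S) by apply: short_sub hp (subsetDl P S) h8.
have hv' : vertex3 l (P :\: S, Q :|: S, Rr) by rewrite /vertex3 hne e1 h3 e2 e3 e4 e5 e6 hsh h10.
split => //.
have [/eqP S0 | S0] := boolP (S == set0).
  apply: (reach_le (k := 0)) => //; apply: reach_refl.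
  by rewrite S0 setD0 setU0 same3_refl.
apply: reach_adj; rewrite /adj hv hv' /=.
apply/existsP; exists (mk4 (P :\: S) S Q Rr).
apply/existsP; exists ord0; apply/existsP; exists (Ordinal (isT : (1 < 4)%N)).
have f1 : [disjoint P :\: S & S] by apply/disjP2 => i; rewrite ?inE; bcase.
have f2 : [disjoint P :\: S & Q] by apply/disjP2 => i; rewrite ?inE; move: (dpt i h4); bcase.
have f3 : [disjoint S & Q] by apply/disjP2 => i; rewrite ?inE; move: (dpt i h4) (spt i hs); bcase.
have f4 : [disjoint S & Rr] by apply/disjP2 => i; rewrite ?inE; move: (dpt i h6) (spt i hs); bcase.
have f5 : P :\: S :|: S :|: Q :|: Rr == setT.
  by apply/setT_pt => i; rewrite ?inE; move: (upt i h7) (spt i hs); bcase.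
have f6 : short l S by apply: short_sub hp hs h8.
have f7 : P :\: S :|: S = P by apply/setP => i; rewrite ?inE; move: (spt i hs); bcase.
rewrite /edge4 /mk4 hne S0 h2 h3 f1 f2 e4 f3 f4 h5 f5 e6 f6 h9 h10 /=.
by rewrite /Defs.merge /= f7 (setUC S) /mk3 !eqxx.
Qed.

Lemma moveg (R : realFieldType) n (l : 'I_n -> R) (hp : forall i, 0 < l i)
  (T : triple n) (P Q Rr S : {set 'I_n}) :
  vertex3 l T -> same3 T (P, Q, Rr) -> S \subset P -> P :\: S != set0 -> short l (Q :|: S) ->
  vertex3 l (P :\: S, Q :|: S, Rr) /\ reach l 1 T (P :\: S, Q :|: S, Rr).
Proof.
move=> hv hs h1 h2 h3.
have [a b] := move1 hp (vertex3_same3 hs hv) h1 h2 h3.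
by split => //; apply: (reach_lift b (same3_sym hs)).
Qed.

Lemma interval (R : realFieldType) n (l : 'I_n -> R) (M L : R) (A : {set 'I_n}) :
  (forall i, i \in A -> l i <= M) -> (forall S : {set 'I_n}, S \subset A -> w l S != L) ->
  L < w l A -> 0 < L + M ->
  exists S : {set 'I_n}, [/\ S \subset A, L < w l S & w l S < L + M].
Proof.
move=> h1 h2 h3 h4.
have [k hk] : exists k, #|A| = k by exists #|A|.
elim: k A hk h1 h2 h3 => [|k IH] A hk h1 h2 h3.
  move: (cards0_eq hk) => A0; exists A; split => //.
  by rewrite /w A0 big_set0 in h3 *; lra.
have : A != set0 by rewrite -card_gt0 hk.
case/set0Pn => x xA.
have hk' : #|A :\ x| = k by move: hk; rewrite (cardsD1 x) xA add1n => -[].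
have [hlt | hge] := ltrP L (w l (A :\ x)).
  have [S [s1 s2 s3]] := IH (A :\ x) hk'
     (fun i hi => h1 i (subsetP (subsetDl A [set x]) i hi))
     (fun S hS => h2 S (subset_trans hS (subsetDl A [set x]))) hlt.
  by exists S; split => //; apply: subset_trans s1 (subsetDl A [set x]).
exists A; split => //.
have hne := h2 (A :\ x) (subsetDl A [set x]).
have hlt : w l (A :\ x) < L by rewrite lt_neqAle hne hge.
have e : w l A = l x + w l (A :\ x) by rewrite /w (big_setD1 x).
have := h1 x xA; rewrite e; lra.
Qed.

Lemma w_part (R : realFieldType) n (l : 'I_n -> R) (a b c : {set 'I_n}) :
  vertex3 l (a, b, c) -> w l a + w l b + w l c = totlen l.
Proof.
rewrite /vertex3 => /and4P [h1 h2 h3 /and4P [h4 h5 h6 /and4P [h7 h8 h9 h10]]].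
rewrite -w_disjU // -w_disjU; last first.
  by apply/disjP2 => i; rewrite ?inE; move: (dpt i h5) (dpt i h6); bcase.
rewrite (eqP h7) -(w_tot l setT).
have -> : ~: [set: 'I_n] = set0 by apply/setP => i; rewrite !inE.
by rewrite /w big_set0 addr0.
Qed.

Lemma tohub (R : realFieldType) n (l : 'I_n -> R) (hp : forall i, 0 < l i)
  (hg : forall J : {set 'I_n}, \sum_(i in J) l i != \sum_(i in ~: J) l i)
  (m : 'I_n) (hm : forall i, l i <= l m) (A B C : {set 'I_n}) :
  vertex3 l (A, B, C) -> m \in A ->
  exists h : triple n, [/\ vertex3 l h, h.1.1 = [set m] & reach l 2 (A, B, C) h].
Proof.
move=> hv mA.
move: (hv) => /and4P [h1 h2 h3 /and4P [h4 h5 h6 /and4P [h7 h8 h9 h10]]].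
have ht := w_part hv.
have sA : w l A < totlen l / 2%:R := h8.
have sB : w l B < totlen l / 2%:R := h9.
have sC : w l C < totlen l / 2%:R := h10.
have eA : w l A = l m + w l (A :\ m) by rewrite /w (big_setD1 m).
have hgS : forall S : {set 'I_n}, S \subset A :\ m -> w l S != totlen l / 2%:R - w l B - l m.
  move=> S hS; apply/eqP => e.
  apply: (negP (w_gen (S :|: B :|: [set m]) hg)); apply/eqP.
  have d1 : [disjoint S & B].
    apply/disjP2 => i; rewrite ?inE; move: (dpt i h4) (spt i hS); rewrite ?inE; bcase; by case: (i == m).
  have d2 : [disjoint S :|: B & [set m]].
    apply/disjP2 => i; rewrite ?inE; case: (eqVneq i m) => [->|_]; rewrite ?andbF ?andbT //.
    move: (dpt m h4) (spt m hS); rewrite ?inE eqxx mA /=; bcase; intros; simpl in *; try discriminate; done.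
  rewrite w_disjU // w_disjU // /w big_set1 -/(w l S) -/(w l B) e; lra.
have i1 : totlen l / 2%:R - w l B - l m < w l (A :\ m) by lra.
have i2 : 0 < totlen l / 2%:R - w l B - l m + l m by lra.
have [S [s1 s2 s3]] := interval (fun i _ => hm i) hgS i1 i2.
have mS : m \notin S by apply/negP => /(subsetP s1); rewrite !inE eqxx.
have s1' : S \subset A := subset_trans s1 (subsetDl A [set m]).
have hne : A :\: S != set0 by apply/set0Pn; exists m; rewrite inE mA andbT.
have dBS : [disjoint B & S].
  by apply/disjP2 => i; rewrite ?inE; move: (dpt i h4) (spt i s1'); bcase.
have hsh : short l (B :|: S).
  rewrite /short -/(w l (B :|: S)) w_disjU //; lra.
have [v1 r1] := moveg hp (T := (A, B, C)) (P := A) (Q := B) (Rr := C) hv (same3_refl _) s1' hne hsh.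
set S2 := (A :\: S) :\ m.
have hs2 : S2 \subset A :\: S by apply: subsetDl.
have hne2 : (A :\: S) :\: S2 != set0.
  by apply/set0Pn; exists m; rewrite !inE eqxx mA /= mS.
have dCS2 : [disjoint C & S2].
  by apply/disjP2 => i; rewrite ?inE; move: (dpt i h6); bcase; rewrite ?andbF.
have eAm : A :\ m = S :|: S2.
  apply/setP => i; rewrite !inE; move: (spt i s1); rewrite !inE.
  by case: (i == m); bcase.
have dSS2 : [disjoint S & S2] by apply/disjP2 => i; rewrite ?inE; bcase; rewrite ?andbF.
have wAm : w l (A :\ m) = w l S + w l S2 by rewrite eAm w_disjU.
have hsh2 : short l (C :|: S2).
  rewrite /short -/(w l (C :|: S2)) w_disjU //; lra.
have hs3 : same3 (A :\: S, B :|: S, C) (A :\: S, C, B :|: S) by orsolve.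
have [v2 r2] := moveg hp v1 hs3 hs2 hne2 hsh2.
exists ((A :\: S) :\: S2, C :|: S2, B :|: S); split => //=.
  apply/setP => i; rewrite !inE; case: (eqVneq i m) => [->|_] /=; first by rewrite mA mS.
  by bcase.
exact: (reach_trans r1 r2).
Qed.

Lemma v3pt (R : realFieldType) n (l : 'I_n -> R) a b c :
  vertex3 l (a, b, c) -> forall i,
  [&& (i \in a) || (i \in b) || (i \in c), ~~ ((i \in a) && (i \in b)),
      ~~ ((i \in b) && (i \in c)) & ~~ ((i \in a) && (i \in c))].
Proof.
rewrite /vertex3 => /and4P [h1 h2 h3 /and4P [h4 h5 h6 /and4P [h7 h8 h9 h10]]] i.
by rewrite (upt i h7) (dpt i h4) (dpt i h5) (dpt i h6).
Qed.

Ltac bcase2 := repeat match goal with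
 | |- context [?i \in ?A] => case: (i \in A)
 | |- context [?i == ?j] => case: (i == j)
 end.
Ltac bfin := bcase2; intros; simpl in *; try discriminate; try done.

Lemma w_set0 (R : realFieldType) n (l : 'I_n -> R) : w l set0 = 0.
Proof. by rewrite /w big_set0. Qed.

Lemma hub (R : realFieldType) n (l : 'I_n -> R) (hp : forall i, 0 < l i)
  (hg : forall J : {set 'I_n}, \sum_(i in J) l i != \sum_(i in ~: J) l i)
  (m : 'I_n) (P B C P' B' C' : {set 'I_n}) :
  vertex3 l (P, B, C) -> vertex3 l (P', B', C') -> P = [set m] -> P' = [set m] ->
  reach l 3 (P, B, C) (P', B', C').
Proof.
move=> hv hv' eP eP'; subst P P'.
have pt := v3pt hv; have pt' := v3pt hv'.
move: (hv) => /and4P [h1 h2 h3 /and4P [h4 h5 h6 /and4P [h7 h8 h9 h10]]].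
move: (hv') => /and4P [h1' h2' h3' /and4P [h4' h5' h6' /and4P [h7' h8' h9' h10']]].
have ht := w_part hv.
have sm : w l [set m] < totlen l / 2%:R := h8.
have sB : w l B < totlen l / 2%:R := h9.
have sC : w l C < totlen l / 2%:R := h10.
have sB' : w l B' < totlen l / 2%:R := h9'.
have sC' : w l C' < totlen l / 2%:R := h10'.
have wm : w l [set m] = l m by rewrite /w big_set1.
have eB : B = (B :&: B') :|: (B :&: C').
  by apply/setP => i; move: (pt i) (pt' i); rewrite !inE; bfin.
have eC : C = (C :&: B') :|: (C :&: C').
  by apply/setP => i; move: (pt i) (pt' i); rewrite !inE; bfin.
have wB : w l B = w l (B :&: B') + w l (B :&: C').
  rewrite {1}eB w_disjU //.
  by apply/disjP2 => i; move: (pt i) (pt' i); rewrite !inE; bfin.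
have wC : w l C = w l (C :&: B') + w l (C :&: C').
  rewrite {1}eC w_disjU //.
  by apply/disjP2 => i; move: (pt i) (pt' i); rewrite !inE; bfin.
have gx : w l ([set m] :|: (B :&: B')) != totlen l / 2%:R by apply: w_gen.
have dmx : [disjoint [set m] & B :&: B'].
  by apply/disjP2 => i; move: (pt i) (pt' i); rewrite !inE; bfin.
rewrite w_disjU // wm in gx.
have [hx | hx] := ltrP (totlen l / 2%:R) (l m + w l (B :&: B')).
-
  have nBB' : B :&: B' != set0.
    apply/negP => /eqP e; rewrite e w_set0 in hx; lra.
  set S1 := B :&: C'.
  have q1 : short l (C :|: S1).
    rewrite /short -/(w l (C :|: S1)) w_disjU; first lra.
    by apply/disjP2 => i; move: (pt i) (pt' i); rewrite !inE; bfin.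
  have q2 : B :\: S1 != set0.
    have -> : B :\: S1 = B :&: B' by apply/setP => i; move: (pt i) (pt' i); rewrite !inE; bfin.
    done.
  have [v1 r1] := moveg hp (T := ([set m], B, C)) (P := B) (Q := C) (Rr := [set m]) (S := S1) hv
    ltac:(orsolve) (subsetIl _ _) q2 q1.
  set S2 := C :&: B'.
  have e1 : (C :|: S1) :\: S2 = C'.
    by apply/setP => i; move: (pt i) (pt' i); rewrite !inE; bfin.
  have e2 : (B :\: S1) :|: S2 = B'.
    by apply/setP => i; move: (pt i) (pt' i); rewrite !inE; bfin.
  have q3 : S2 \subset C :|: S1 by apply/subsetP => i; rewrite !inE => /andP [-> _].
  have q4 : (C :|: S1) :\: S2 != set0 by rewrite e1.
  have q5 : short l ((B :\: S1) :|: S2) by rewrite e2.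
  have [v2 r2] := moveg hp (T := (B :\: S1, C :|: S1, [set m])) (P := C :|: S1) (Q := B :\: S1)
    (Rr := [set m]) (S := S2) v1 ltac:(orsolve) q3 q4 q5.
  rewrite e1 e2 in r2.
  apply: (reach_le (k := 1 + 1)) => //.
  apply: (reach_trans r1); apply: (reach_trans r2); apply: reach_refl; orsolve.
have hx' : l m + w l (B :&: B') < totlen l / 2%:R by rewrite lt_neqAle gx hx.
have [e0 | n0] := boolP (B :&: C' == set0).
  set S := C :&: B'.
  have e1 : C :\: S = C'.
    by apply/setP => i; move/eqP/setP/(_ i): e0; move: (pt i) (pt' i); rewrite !inE; bfin.
  have e2 : B :|: S = B'.
    by apply/setP => i; move/eqP/setP/(_ i): e0; move: (pt i) (pt' i); rewrite !inE; bfin.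
  have q3 : S \subset C by apply: subsetIl.
  have q4 : C :\: S != set0 by rewrite e1.
  have q5 : short l (B :|: S) by rewrite e2.
  have [v1 r1] := moveg hp (T := ([set m], B, C)) (P := C) (Q := B) (Rr := [set m]) (S := S) hv
    ltac:(orsolve) q3 q4 q5.
  rewrite e1 e2 in r1.
  apply: (reach_le (k := 1 + 0)) => //.
  apply: (reach_trans r1); apply: reach_refl; orsolve.
have [e0' | n0'] := boolP (C :&: B' == set0).
  set S := B :&: C'.
  have e1 : B :\: S = B'.
    by apply/setP => i; move/eqP/setP/(_ i): e0'; move: (pt i) (pt' i); rewrite !inE; bfin.
  have e2 : C :|: S = C'.
    by apply/setP => i; move/eqP/setP/(_ i): e0'; move: (pt i) (pt' i); rewrite !inE; bfin.
  have q3 : S \subset B by apply: subsetIl.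
  have q4 : B :\: S != set0 by rewrite e1.
  have q5 : short l (C :|: S) by rewrite e2.
  have [v1 r1] := moveg hp (T := ([set m], B, C)) (P := B) (Q := C) (Rr := [set m]) (S := S) hv
    ltac:(orsolve) q3 q4 q5.
  rewrite e1 e2 in r1.
  apply: (reach_le (k := 1 + 0)) => //.
  apply: (reach_trans r1); apply: reach_refl; orsolve.
set S1 := B :&: B'.
have q1 : S1 \subset B by apply: subsetIl.
have q2 : B :\: S1 != set0.
  have -> : B :\: S1 = B :&: C' by apply/setP => i; move: (pt i) (pt' i); rewrite !inE; bfin.
  done.
have q3 : short l ([set m] :|: S1) by rewrite /short -/(w l ([set m] :|: S1)) w_disjU // wm.
have [v1 r1] := moveg hp (T := ([set m], B, C)) (P := B) (Q := [set m]) (Rr := C) (S := S1) hv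
  ltac:(orsolve) q1 q2 q3.
set S2 := C :&: C'.
have q4 : S2 \subset C by apply: subsetIl.
have q5 : C :\: S2 != set0.
  have -> : C :\: S2 = C :&: B' by apply/setP => i; move: (pt i) (pt' i); rewrite !inE; bfin.
  exact: n0'.
have e2 : (B :\: S1) :|: S2 = C'.
  by apply/setP => i; move: (pt i) (pt' i); rewrite !inE; bfin.
have q6 : short l ((B :\: S1) :|: S2) by rewrite e2.
have [v2 r2] := moveg hp (T := (B :\: S1, [set m] :|: S1, C)) (P := C) (Q := B :\: S1)
  (Rr := [set m] :|: S1) (S := S2) v1 ltac:(orsolve) q4 q5 q6.
rewrite e2 in v2 r2.
have q7 : S1 \subset [set m] :|: S1 by apply: subsetUr.
have e3 : ([set m] :|: S1) :\: S1 = [set m].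
  by apply/setP => i; move: (pt i) (pt' i); rewrite !inE; bfin.
have e4 : (C :\: S2) :|: S1 = B'.
  by apply/setP => i; move: (pt i) (pt' i); rewrite !inE; bfin.
have q8 : ([set m] :|: S1) :\: S1 != set0 by rewrite e3.
have q9 : short l ((C :\: S2) :|: S1) by rewrite e4.
have [v3 r3] := moveg hp (T := (C :\: S2, C', [set m] :|: S1)) (P := [set m] :|: S1) (Q := C :\: S2)
  (Rr := C') (S := S1) v2 ltac:(orsolve) q7 q8 q9.
rewrite e3 e4 in r3.
apply: (reach_le (k := 1 + (1 + (1 + 0)))) => //.
apply: (reach_trans r1); apply: (reach_trans r2); apply: (reach_trans r3); apply: reach_refl; orsolve.
Qed.

Lemma tohub' (R : realFieldType) n (l : 'I_n -> R) (hp : forall i, 0 < l i)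
  (hg : forall J : {set 'I_n}, \sum_(i in J) l i != \sum_(i in ~: J) l i)
  (m : 'I_n) (hm : forall i, l i <= l m) (V : triple n) :
  vertex3 l V -> exists h : triple n, [/\ vertex3 l h, h.1.1 = [set m] & reach l 2 V h].
Proof.
case: V => [[A B C]] hv.
have := v3pt hv m; case/and4P => /orP [/orP [] | ] hmem _ _ _.
- exact: (tohub hp hg hm hv hmem).
- have hs : same3 (A, B, C) (B, C, A) by orsolve.
  have [h [h1 h2 h3]] := tohub hp hg hm (vertex3_same3 hs hv) hmem.
  by exists h; split => //; apply: (reach_lift h3 (same3_sym hs)).
- have hs : same3 (A, B, C) (C, A, B) by orsolve.
  have [h [h1 h2 h3]] := tohub hp hg hm (vertex3_same3 hs hv) hmem.
  by exists h; split => //; apply: (reach_lift h3 (same3_sym hs)).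
Qed.

Unset Implicit Arguments.

Theorem mainTheorem8 (R : realFieldType) (n : nat) (l : 'I_n -> R)
  (hn : (4 <= n)%N)
  (hpos : forall i, 0 < l i)
  (htri : forall i, l i < \sum_(j < n | j != i) l j)
  (hgen : forall J : {set 'I_n}, \sum_(i in J) l i != \sum_(i in ~: J) l i)
  (V V' : triple n) (hV : vertex3 l V) (hV' : vertex3 l V') :
  exists s : seq (triple n),
    [/\ (size s <= 7)%N, path (adj l) V s &
        cyc3 V' (last V s) || cyc3 (mirror V') (last V s)].
Proof.
have i0 : 'I_n := Ordinal (leq_trans (isT : (0 < 4)%N) hn).
case: (@arg_maxP _ _ _ i0 xpredT l isT) => m _ hm.
have hm' : forall i, l i <= l m by move=> i; exact: hm.
have [h [v1 e1 r1]] := tohub' hpos hgen hm' hV.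
have [h' [v2 e2 r2]] := tohub' hpos hgen hm' hV'.
suff : reach l (2 + (3 + 2)) V V' by [].
apply: (reach_trans r1); apply: (reach_trans _ (reach_sym r2)).
case: h v1 e1 {r1} => [[P B C]] v1 /= e1; case: h' v2 e2 {r2} => [[P' B' C']] v2 /= e2.
exact: (hub hpos hgen v1 v2 e1 e2).
Qed.
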